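(* Let $(H_i)_{i=0}^\infty = (2^{\alpha_i}3^{\beta_i})_{i=0}^\infty$ be the increasing enumeration of $\mathcal{H}=\{2^\alpha3^\beta : \alpha,\beta\in\mathbb{N}_0\}$, and define $f\colon\mathbb{N}_0\to\{+1,-1\}$ by $f(0)=+1$ and $f(n)=(-1)^{\alpha_i+\beta_i}$ for $n\in\{H_i,H_i+1,\dots,H_{i+1}-1\}$, $i\in\mathbb{N}_0$. Then for almost all $n\in\mathbb{N}_0$ we have $f(n+1)=f(n)$, $f(2n)=-f(n)$ and $f(3n)=-f(n)$.
   Context: $\mathbb{N}_0=\{0,1,2,\dots\}$. A property holds for almost all $n\in\mathbb{N}_0$ if the set of $n$ where it fails has upper density $\limsup_{N\to\infty}|\cdot\cap\{0,\dots,N-1\}|/N$ equal to $0$. *)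

(* Defs.v *)
From mathcomp Require Import all_boot all_order all_algebra.
From mathcomp Require Import all_classical all_reals all_analysis.
Set Implicit Arguments. Unset Strict Implicit. Unset Printing Implicit Defensive.
Import Order.TTheory GRing.Theory Num.Theory.
Local Open Scope ring_scope.

Definition three_smooth (n : nat) : Prop :=
  exists a b : nat, n = (2 ^ a * 3 ^ b)%N.

(* Upper density of A ⊆ N_0: limsup_{N->oo} |A ∩ {0,...,N-1}| / N
   (for N = 0 the quotient is 0 by MathComp's convention x/0 = 0,
   which does not affect the limsup). *)
Definition upper_density (R : realType) (A : pred nat) : R :=
  limn_sup (fun N : nat => (count A (iota 0 N))%:R / N%:R).

Definition almost_all (R : realType) (P : pred nat) : Prop :=
  upper_density R [pred n | ~~ P n] = 0.

(* Main.v *)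
Require Import Defs.
From mathcomp Require Import all_boot all_order all_algebra.
From mathcomp Require Import all_classical all_reals all_analysis.
Import Order.TTheory GRing.Theory Num.Theory.
Local Open Scope ring_scope.
From mathcomp Require Import zify.

Section NatPart.
Local Open Scope nat_scope.

Lemma sorted_size_bound (p y : nat) (s : seq nat) (x : nat) :
  0 < p -> sorted ltn s -> all (fun n => (x <= p*n) && (p*n < y)) s ->
  size s * p <= y - x + p.
Proof.
move=> p0; elim: s x => [|a s IH] x //= Hs /andP[/andP[xa ay] Hall].
have Hs' : sorted ltn s by move: Hs; rewrite path_sortedE; [case/andP|exact: ltn_trans].
have Ha : all (ltn a) s by move: Hs; rewrite path_sortedE; [case/andP|exact: ltn_trans].
have Hall' : all (fun n => (p*a.+1 <= p*n) && (p*n < y)) s.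
  apply/allP=> n ns; move/allP: Hall => /(_ n ns) /andP[_ ->].
  by move/allP: Ha => /(_ n ns) an; rewrite andbT leq_mul2l; apply/orP; right; exact: an.
have := IH _ Hs' Hall'. case: s {IH Hs Hs' Ha Hall} Hall' => [|b s] /=; first by lia.
move=> /andP[/andP[H1 H2] _] H0; move: H0 H1 H2 xa ay; rewrite !mulSn; lia.
Qed.

Lemma count_lin (p x y N : nat) (P : pred nat) : 0 < p ->
  (forall n, P n -> (x <= p*n) && (p*n < y)) ->
  count P (iota 0 N) * p <= y - x + p.
Proof.
move=> p0 HP; rewrite -size_filter; apply: sorted_size_bound => //.
  apply: sorted_filter; [exact: ltn_trans| exact: iota_ltn_sorted].
by apply/allP=> n; rewrite mem_filter => /andP[/HP].
Qed.

Lemma count_in_le (T : eqType) (a1 a2 : pred T) (s : seq T) :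
  (forall x, x \in s -> a1 x -> a2 x) -> count a1 s <= count a2 s.
Proof.
elim: s => [|z s IH] //= H.
apply: leq_add; last by apply: IH => x xs; apply: H; rewrite inE xs orbT.
by case: (boolP (a1 z)) => //= /(H z (mem_head _ _)) ->.
Qed.

Lemma count_has (T : Type) (I : Type) (P : I -> pred T) (bs : seq I) (s : seq T) :
  count (fun n => has (fun b => P b n) bs) s <= \sum_(b <- bs) count (P b) s.
Proof.
elim: bs => [|b bs IH]; first by rewrite big_nil; elim: s.
rewrite big_cons; apply: leq_trans (leq_add (leqnn _) IH).
rewrite -(count_predUI (P b)); apply: leq_trans (leq_addr _ _).
by apply: sub_count => n /=.
Qed.

Lemma geom_lt (m M X : nat) : 1 < m ->
  \sum_(b <- iota 0 M) (if m ^ b < X then m ^ b else 0) < m ^ M.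
Proof.
move=> m1; elim: M => [|M IH]; first by rewrite big_nil.
have -> : iota 0 M.+1 = iota 0 M ++ [:: M] by rewrite -addn1 iotaD.
rewrite big_cat big_seq1 /= expnS.
have hM : m ^ M <= m * m ^ M by rewrite leq_pmull // ltnW.
case: ifP => _; last by move: IH hM; lia.
have : m ^ M + m ^ M <= m * m ^ M by rewrite addnn -mul2n leq_mul2r m1 orbT.
lia.
Qed.

Lemma geom_le (m M X : nat) : 1 < m ->
  \sum_(b <- iota 0 M) (if m ^ b < X then m ^ b else 0) <= m * X.
Proof.
move=> m1; elim: M => [|M IH]; first by rewrite big_nil.
have -> : iota 0 M.+1 = iota 0 M ++ [:: M] by rewrite -addn1 iotaD.
rewrite big_cat big_seq1 /=.
case: ifP => HX; last by rewrite addn0.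
have := @geom_lt m M X m1.
have : m ^ M + m ^ M <= m * m ^ M by rewrite addnn -mul2n leq_mul2r m1 orbT.
have : m * m ^ M <= m * X by rewrite leq_mul2l ltnW // orbT.
lia.
Qed.

Lemma cubic (t : nat) : t*t*t + 5*t + 6 <= 6 * 2 ^ t.
Proof.
elim: t => [|t IH] //.
rewrite expnS.
case: t IH => [|[|u]] IH //.
have : 0 <= u*(u+1)*(u+2) by [].
move: IH; set z := 2 ^ u.+2; nia.
Qed.

Lemma poly_exp (K : nat) : exists C, forall t, K * (t+1) ^ 2 * 2 <= 2 ^ t + C.
Proof.
exists (K * (24*K+1) ^ 2 * 2) => t.
case: (leqP t (24*K)) => Ht.
  apply: leq_trans (leq_addl _ _).
  rewrite leq_mul2r leq_mul2l; apply/orP; right; apply/orP; right.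
  by rewrite leq_exp2r // leq_add2r.
apply: leq_trans (leq_addr _ _).
have := cubic t.
have : 24 * K * ((t+1)*(t+1)) <= t * ((t+1)*(t+1)) by rewrite leq_mul2r ltnW // orbT.
set z := 2 ^ t; rewrite expnS expn1. nia.
Qed.

Lemma bern (v j : nat) : v ^ j * (v + j) <= (v+1) ^ j * v.
Proof.
elim: j => [|j IH]; first by rewrite !expn0 !mul1n addn0.
rewrite !expnS.
have h1 : v * (v + j.+1) <= (v+1) * (v + j) by nia.
have := leq_mul (leqnn (v+1)) IH.
move: h1; set A := v ^ j; set B := (v+1) ^ j. nia.
Qed.

Lemma cross (P : nat -> bool) n : P 0 -> ~~ P n -> exists j, P j && ~~ P j.+1.
Proof.
elim: n => [|n IH] P0 Pn; first by rewrite P0 in Pn.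
case: (boolP (P n)) => Hn; first by exists n; rewrite Hn.
exact: IH.
Qed.

Lemma pow_trick (u v m K : nat) : 0 < v -> v < u -> 1 < m -> m <= 3 ->
  K*u < (K+1)*v -> exists j, u ^ j < m*v ^ j /\ K*(m*v ^ j) < (K+1)*u ^ j.
Proof.
move=> v0 vu m1 m3 HK.
have [j /andP[Pj nPj]] : exists j, (u ^ j < m*v ^ j) && ~~ (u ^ j.+1 < m*v ^ j.+1).
  apply: (@cross (fun j => u ^ j < m*v ^ j) (2*v)); first by rewrite !expn0 muln1.
  rewrite -leqNgt.
  have hb := bern v (2*v).
  have h3 : 3 * v ^ (2*v) <= (v+1) ^ (2*v).
    have : v ^ (2*v) * (3*v) <= (v+1) ^ (2*v) * v by move: hb; rewrite (_ : v + 2*v = 3*v) //; lia.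
    move: v0; set A := v ^ (2*v); set B := (v+1) ^ (2*v); nia.
  have h4 : (v+1) ^ (2*v) <= u ^ (2*v) by rewrite leq_exp2r ?addn1 //; lia.
  apply: leq_trans h4; apply: leq_trans h3; rewrite leq_mul2r m3 orbT //.
exists j; split => //.
move: nPj; rewrite -leqNgt !expnS.
move: HK v0; set A := u ^ j; set B := v ^ j => HK v0 H.
have H1 : K * (m * B) * v <= K * (u * A) by move: H; nia.
have H2 : K * (u * A) < (K+1) * A * v.
  have Apos : 0 < A by rewrite /A expn_gt0; apply/orP; left; lia.
  move: HK Apos; nia.
move: (leq_ltn_trans H1 H2) v0; nia.
Qed.

Definition ta (c : nat) := trunc_log 2 (3 ^ c).
Definition qq (K c : nat) := (K * 3 ^ c) %/ 2 ^ (ta c).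

Lemma ta_bounds c : 2 ^ (ta c) <= 3 ^ c < 2 ^ (ta c).+1.
Proof. by rewrite trunc_logP ?expn_gt0 // trunc_log_ltn. Qed.

Lemma qq_bounds K c : qq K c * 2 ^ (ta c) <= K * 3 ^ c < (qq K c).+1 * 2 ^ (ta c).
Proof.
rewrite /qq; set d := 2 ^ (ta c).
have d0 : 0 < d by rewrite expn_gt0.
have := divn_eq (K * 3 ^ c) d; have := ltn_pmod (K * 3 ^ c) d0.
set r := _ %% _; set q := _ %/ _. move=> hr he. rewrite mulSn; lia.
Qed.

Lemma qq_range K c : 0 < K -> K <= qq K c < K + K.
Proof.
move=> K0; have := qq_bounds K c; have := ta_bounds c.
set d := 2 ^ (ta c); set X := 3 ^ c; set q := qq K c.
rewrite expnS -/d => /andP[h1 h2] /andP[h3 h4].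
apply/andP; split.
  have : K * d <= q.+1 * d - 1.
    have : K * d <= K * X by rewrite leq_mul2l h1 orbT.
    lia.
  have d0 : 0 < d by rewrite expn_gt0.
  move=> H; have : K * d < q.+1 * d by lia.
  rewrite ltn_mul2r; case/andP => _; lia.
have : q * d < (K + K) * d.
  have : K * X < K * (2 * d) by rewrite ltn_mul2l h2 andbT.
  lia.
by rewrite ltn_mul2r => /andP[].
Qed.

Lemma odd3 D : odd (3 ^ D). Proof. by rewrite oddX orbT. Qed.

Lemma arith1 K q P Q : 0 < K -> K <= q -> q*P < q.+1*Q -> K*P < (K+1)*Q.
Proof.
move=> K0 Kq h1; rewrite ltnNge; apply/negP => h2.
have h3 : q * ((K+1) * Q) <= q * (K * P) by rewrite leq_mul2l h2 orbT.
have h5 : K * (q * P) < K * (q.+1 * Q) by rewrite ltn_mul2l K0.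
have h6 : K * Q <= q * Q by rewrite leq_mul2r Kq orbT.
nia.
Qed.
Lemma arith2 q X Y P Q K : q*Y <= K*X -> K*(X*P) < q.+1*(Y*Q) -> 0 < Y -> q*P < q.+1*Q.
Proof.
move=> h1 h2 Y0.
have h3 : q * Y * P <= K * X * P by rewrite leq_mul2r h1 orbT.
have : Y * (q * P) < Y * (q.+1 * Q) by nia.
by rewrite ltn_mul2l Y0.
Qed.
Lemma arith3 q X Y P Q K : K*X < q.+1*Y -> q*(Y*Q) <= K*(X*P) -> 0 < Y -> 0 < P -> q*Q < q.+1*P.
Proof.
move=> h1 h2 Y0 P0.
have h3 : K * X * P <= q.+1 * Y * P by rewrite leq_mul2r ltnW ?orbT.
have : Y * (q * Q) < Y * (q.+1 * P).
  have h4 : K * X * P < q.+1 * Y * P by rewrite ltn_mul2r h1 P0.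
  nia.
by rewrite ltn_mul2l Y0.
Qed.

Lemma neq32 D E : 0 < D -> 3 ^ D != 2 ^ E.
Proof.
move=> D0; apply/eqP => h; have := odd3 D; rewrite h oddX /=.
case: E h => [|E] //= h _; move: h; rewrite expn0.
have : 3 <= 3 ^ D by rewrite -{1}(expn1 3) leq_exp2l //.
lia.
Qed.

Lemma pair_close K c1 c2 : 0 < K -> c1 < c2 -> qq K c1 = qq K c2 ->
  exists D E, 0 < D /\
   ((2 ^ E < 3 ^ D /\ K*3 ^ D < (K+1)*2 ^ E) \/ (3 ^ D < 2 ^ E /\ K*2 ^ E < (K+1)*3 ^ D)).
Proof.
move=> K0 c12 Hq.
have /andP[a1 b1] := ta_bounds c1; have /andP[a2 b2] := ta_bounds c2.
have hta : ta c1 <= ta c2.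
  have : 2 ^ (ta c1) < 2 ^ (ta c2).+1.
    apply: leq_ltn_trans a1 _; apply: leq_ltn_trans _ b2.
    by rewrite leq_exp2l // ltnW.
  by rewrite ltn_exp2l.
exists (c2 - c1), (ta c2 - ta c1); split; first by lia.
have e3 : 3 ^ c2 = 3 ^ c1 * 3 ^ (c2-c1) by rewrite -expnD; congr (_ ^ _); lia.
have e2 : 2 ^ (ta c2) = 2 ^ (ta c1) * 2 ^ (ta c2 - ta c1) by rewrite -expnD; congr (_ ^ _); lia.
have /andP[q1 q1'] := qq_bounds K c1; have /andP[q2 q2'] := qq_bounds K c2.
have /andP[Kq _] := @qq_range K c1 K0.
rewrite -Hq e3 e2 in q2 q2'.
have P3 : 3 <= 3 ^ (c2-c1) by rewrite -{1}(expn1 3) leq_exp2l //; lia.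
have Y0 : 0 < 2 ^ (ta c1) by rewrite expn_gt0.
move: q1 q1' q2 q2' Kq P3 Y0 (odd3 (c2 - c1)).
set q := qq K c1; set X := 3 ^ c1; set Y := 2 ^ (ta c1); set P := 3 ^ (c2-c1); set E := ta c2 - ta c1.
move=> q1 q1' q2 q2' Kq P3 Y0 oP.
have PQ : P != 2 ^ E by apply: neq32; lia.
set Q := 2 ^ E in PQ *.
case: (ltngtP Q P) => HPQ; last by rewrite HPQ eqxx in PQ.
- left; split => //; apply: (@arith1 K q P Q K0 Kq); exact: (@arith2 q X Y P Q K q1 q2' Y0).
- right; split => //; apply: (@arith1 K q Q P K0 Kq); apply: (@arith3 q X Y P Q K q1' q2 Y0); lia.
Qed.
Lemma pigeon K : 0 < K -> exists D E, 0 < D /\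
   ((2 ^ E < 3 ^ D /\ K*3 ^ D < (K+1)*2 ^ E) \/ (3 ^ D < 2 ^ E /\ K*2 ^ E < (K+1)*3 ^ D)).
Proof.
move=> K0.
have qlt : forall c : 'I_K.+1, qq K c - K < K.
  by move=> c; have := @qq_range K c K0; lia.
case: (boolP [exists c1 : 'I_K.+1, exists c2 : 'I_K.+1, (c1 != c2) && (qq K c1 == qq K c2)]); last first.
  move=> /negP hn; exfalso.
  pose g := fun c : 'I_K.+1 => @Ordinal K (qq K c - K) (qlt c).
  have : injective g.
    move=> c1 c2 /(congr1 val) /= h; apply/eqP; apply/negPn/negP => hne.
    apply: hn; apply/existsP; exists c1; apply/existsP; exists c2; rewrite hne /=.
    apply/eqP; have := @qq_range K c1 K0; have := @qq_range K c2 K0; lia.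
  by move/leq_card; rewrite !card_ord; lia.
case/existsP => c1 /existsP [c2 /andP[ne /eqP e]].
case: (ltngtP c1 c2) => h.
- exact: (@pair_close K _ _ K0 h) e.
- exact: (@pair_close K _ _ K0 h) (esym e).
- by rewrite (val_inj h) eqxx in ne.
Qed.

Lemma approx K : 0 < K ->
  (exists a c, 3 ^ c < 2 ^ a /\ K*2 ^ a < (K+1)*3 ^ c) /\
  (exists d e, 2 ^ e < 3 ^ d /\ K*3 ^ d < (K+1)*2 ^ e).
Proof.
move=> K0; have [D [E [D0 [[h1 h2]|[h1 h2]]]]] := @pigeon K K0.
- split; last by exists D, E.
  have [j [j1 j2]] := @pow_trick (3 ^ D) (2 ^ E) 2 K (expn_gt0 _ _) h1 erefl erefl h2.
  exists (E*j).+1, (D*j); rewrite expnS !expnM; split => //.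
- split; first by exists E, D.
  have [j [j1 j2]] := @pow_trick (2 ^ E) (3 ^ D) 3 K (expn_gt0 _ _) h1 erefl erefl h2.
  exists (D*j).+1, (E*j); rewrite expnS !expnM; split => //.
Qed.

End NatPart.

Section HPart.
Local Set Implicit Arguments.
Local Unset Strict Implicit.
Local Open Scope nat_scope.

Lemma logn2_sm a b : logn 2 (2 ^ a * 3 ^ b) = a.
Proof. by rewrite lognM ?expn_gt0 // !lognX /= muln0 addn0 muln1. Qed.
Lemma logn3_sm a b : logn 3 (2 ^ a * 3 ^ b) = b.
Proof. by rewrite lognM ?expn_gt0 // !lognX /= muln0 add0n muln1. Qed.
Lemma sm_inj (a b c d : nat) : (2 ^ a * 3 ^ b)%N = (2 ^ c * 3 ^ d)%N -> a = c /\ b = d.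
Proof. by move=> h; split; [rewrite -(logn2_sm a b) h logn2_sm | rewrite -(logn3_sm a b) h logn3_sm]. Qed.

Lemma ts_mul p h : (p = 2 \/ p = 3) -> three_smooth h -> three_smooth (p * h).
Proof.
move=> [->|->] [a [b ->]]; [exists a.+1, b | exists a, b.+1]; rewrite !expnS; lia.
Qed.

Lemma ts_pos h : three_smooth h -> 0 < h.
Proof. by move=> [a [b ->]]; rewrite muln_gt0 !expn_gt0. Qed.

Lemma ts_div p x : (p = 2 \/ p = 3) -> three_smooth x -> 0 < logn p x ->
  exists y, x = p * y /\ three_smooth y.
Proof.
move=> [->|->] [a [b ->]].
- rewrite logn2_sm; case: a => // a _; exists (2 ^ a * 3 ^ b); split; last by exists a, b.
  by rewrite expnS mulnA.
- rewrite logn3_sm; case: b => // b _; exists (2 ^ a * 3 ^ b); split; last by exists a, b.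
  by rewrite expnS; lia.
Qed.


Lemma Hlt (H : nat -> nat) (Hinc : forall i : nat, (H i < H i.+1)%N) i j : (H i < H j) = (i < j).
Proof.
have hom : forall i j, i < j -> H i < H j.
  move=> a b; elim: b => // b IH; rewrite ltnS leq_eqVlt => /orP[/eqP ->//|/IH h].
  exact: ltn_trans h (Hinc b).
apply/idP/idP; last exact: hom.
move=> h; rewrite ltnNge; apply/negP => ji.
have : H j <= H i by move: ji; rewrite leq_eqVlt => /orP[/eqP ->//|/hom /ltnW].
lia.
Qed.

Lemma Hle (H : nat -> nat) (Hinc : forall i : nat, (H i < H i.+1)%N) i j : (H i <= H j) = (i <= j).
Proof. by rewrite leqNgt (Hlt Hinc j i) -leqNgt. Qed.

Lemma H0 (H : nat -> nat) (alpha beta : nat -> nat) (Hinc : forall i : nat, (H i < H i.+1)%N) (Hsm : forall n : nat, three_smooth n <-> exists i : nat, H i = n) (Hab : forall i : nat, H i = (2 ^ alpha i * 3 ^ beta i)%N) : H 0 = 1.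
Proof.
have [j hj] : exists j, H j = 1 by apply/Hsm; exists 0, 0.
have : H 0 <= 1 by rewrite -hj Hle.
have : 0 < H 0 by rewrite Hab muln_gt0 !expn_gt0.
lia.
Qed.

Lemma Hts (H : nat -> nat) (Hsm : forall n : nat, three_smooth n <-> exists i : nat, H i = n) i : three_smooth (H i).
Proof. by apply/Hsm; exists i. Qed.

Lemma block (H : nat -> nat) (alpha beta : nat -> nat) (Hinc : forall i : nat, (H i < H i.+1)%N) (Hsm : forall n : nat, three_smooth n <-> exists i : nat, H i = n) (Hab : forall i : nat, H i = (2 ^ alpha i * 3 ^ beta i)%N) n : 0 < n -> exists i, H i <= n < H i.+1.
Proof.
elim: n => // n IH _.
case: n IH => [|n] IH.
  by exists 0; rewrite (H0 Hinc Hsm Hab) /=; have := Hinc 0; rewrite (H0 Hinc Hsm Hab).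
have [i /andP[h1 h2]] := IH erefl.
case: (ltngtP n.+2 (H i.+1)) => h3.
- by exists i; rewrite h3; lia.
- lia.
- by exists i.+1; rewrite h3 leqnn Hinc.
Qed.

Lemma below (H : nat -> nat) (Hinc : forall i : nat, (H i < H i.+1)%N) (Hsm : forall n : nat, three_smooth n <-> exists i : nat, H i = n) j x h : H j <= x < H j.+1 -> three_smooth h -> h <= x -> h <= H j.
Proof.
move=> /andP[_ h2] /Hsm [k <-] hk.
have : H k < H j.+1 by lia.
by rewrite (Hlt Hinc) ltnS -(Hle Hinc).
Qed.

Lemma above (H : nat -> nat) (Hinc : forall i : nat, (H i < H i.+1)%N) (Hsm : forall n : nat, three_smooth n <-> exists i : nat, H i = n) j x h : H j <= x < H j.+1 -> three_smooth h -> H j < h -> x < h.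
Proof.
move=> /andP[_ h2] /Hsm [k <-]; rewrite (Hlt Hinc) => hk.
have : H j.+1 <= H k by rewrite (Hle Hinc).
lia.
Qed.

Lemma in_block (H : nat -> nat) (Hinc : forall i : nat, (H i < H i.+1)%N) (Hsm : forall n : nat, three_smooth n <-> exists i : nat, H i = n) i n h : H i <= h -> h <= n < H i.+1 -> three_smooth h -> h = H i.
Proof.
move=> h1 /andP[h2 h3] /Hsm [k hk]; subst h.
move: h1; rewrite (Hle Hinc) => h1.
have : H k < H i.+1 by lia.
rewrite (Hlt Hinc) => h4; have -> : k = i by lia.
by [].
Qed.

Lemma fail_mult (H : nat -> nat) (alpha beta : nat -> nat) (f : nat -> int) (Hinc : forall i : nat, (H i < H i.+1)%N) (Hsm : forall n : nat, three_smooth n <-> exists i : nat, H i = n) (Hab : forall i : nat, H i = (2 ^ alpha i * 3 ^ beta i)%N) (Hf : forall i n : nat, (H i <= n < H i.+1)%N -> f n = (-1) ^+ (alpha i + beta i)) p n i j : (p = 2 \/ p = 3) -> H i <= n < H i.+1 ->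
  H j <= p*n < H j.+1 -> (f (p*n) != - f n)%R -> logn p (H j) = 0.
Proof.
move=> hp hi hj hne; apply/eqP; rewrite eqn0Ngt; apply/negP => hl.
have [y [ey tsy]] := ts_div hp (Hts Hsm j) hl.
have p0 : 0 < p by case: hp => ->.
have hpi : p * H i <= H j.
  apply: (below Hinc Hsm hj (ts_mul hp (Hts Hsm i))); rewrite leq_mul2l; apply/orP; right.
  by case/andP: hi.
have eyi : y = H i.
  apply: (in_block Hinc Hsm (n:=n)) => //.
  - by move: hpi; rewrite ey leq_mul2l; case/orP => //; rewrite eqn0Ngt p0.
  - apply/andP; split; last by case/andP: hi.
    by case/andP: hj => + _; rewrite ey leq_mul2l; case/orP => //; rewrite eqn0Ngt p0.
have fn := Hf _ _ hi; have fpn := Hf _ _ hj.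
move: hne; rewrite fn fpn.
move: ey; rewrite eyi !Hab.
case: hp => -> e.
- have [-> ->] : alpha j = (alpha i).+1 /\ beta j = beta i.
    by apply: sm_inj; rewrite e expnS mulnA.
  by rewrite addSn exprS mulN1r eqxx.
- have [-> ->] : alpha j = alpha i /\ beta j = (beta i).+1.
    by apply: sm_inj; rewrite e expnS; lia.
  by rewrite addnS exprS mulN1r eqxx.
Qed.

Lemma fail_succ (H : nat -> nat) (alpha beta : nat -> nat) (f : nat -> int) (Hinc : forall i : nat, (H i < H i.+1)%N) (Hsm : forall n : nat, three_smooth n <-> exists i : nat, H i = n) (Hab : forall i : nat, H i = (2 ^ alpha i * 3 ^ beta i)%N) (Hf : forall i n : nat, (H i <= n < H i.+1)%N -> f n = (-1) ^+ (alpha i + beta i)) n : 0 < n -> f n.+1 != f n -> three_smooth n.+1.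
Proof.
move=> n0; have [i /andP[h1 h2]] := block Hinc Hsm Hab n0 => hne.
case: (ltngtP n.+1 (H i.+1)) => h3.
- move: hne; rewrite (Hf i n); last by rewrite h1 h2.
  by rewrite (Hf i n.+1) ?eqxx // h3 andbT; apply: leq_trans h1 _.

- lia.
- by rewrite h3; exact: Hts Hsm _.
Qed.


Definition Pg m Z W K T n := [&& m*K <= T, T <= m*n & m*n*Z < T*W].

Lemma arith4 Z W K T m cnt : 0 < Z -> K*W < (K+1)*Z -> m*K <= T ->
  cnt*(m*Z) <= T*W - T*Z + m*Z -> m*K*cnt <= 2*T.
Proof.
move=> Z0 h1 h2 h3.
have h4 : K*W - K*Z <= Z by lia.
have h5 : T*(K*W - K*Z) <= T*Z by rewrite leq_mul2l h4 orbT.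
have h6 : K*(T*W - T*Z) <= T*Z by move: h5; rewrite !mulnBr; lia.
have h7 : K*(cnt*(m*Z)) <= K*(T*W - T*Z + m*Z) by rewrite leq_mul2l h3 orbT.
have h8 : (m*K*cnt)*Z <= (2*T)*Z.
  have : (m*K*cnt)*Z = K*(cnt*(m*Z)) by lia.
  move=> ->; apply: leq_trans h7 _; rewrite mulnDr.
  have : K*(m*Z) <= T*Z by rewrite mulnA (mulnC K) leq_mul2r h2 orbT.
  lia.
by move: h8; rewrite leq_mul2r eqn0Ngt Z0.
Qed.

Lemma count_Pg m Z W K T N : 0 < m -> 0 < Z -> K*W < (K+1)*Z ->
  m*K*count (Pg m Z W K T) (iota 0 N) <= 2 * (if T < m*N then T else 0).
Proof.
move=> m0 Z0 hK; case: ifP => hT; last first.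
  have -> : count (Pg m Z W K T) (iota 0 N) = 0.
    apply/eqP; rewrite -leqn0; apply: leq_trans (@count_in_le _ (Pg m Z W K T) pred0 (iota 0 N) _) _; last by rewrite count_pred0.
    move=> n; rewrite mem_iota add0n => /andP[_ nN] /and3P[_ h _].
    have : m * n < m * N by rewrite ltn_mul2l m0.
    lia.
  by rewrite muln0.
case: (leqP (m*K) T) => hmK; last first.
  rewrite (@eq_count _ _ pred0); first by rewrite count_pred0 muln0.
  by move=> n; rewrite /Pg leqNgt hmK.
apply: (arith4 Z0 hK hmK).
apply: count_lin; first by rewrite muln_gt0 m0.
move=> n /and3P[_ h1 h2]; apply/andP; split.
  by rewrite mulnAC leq_mul2r h1 orbT.
by rewrite mulnAC.
Qed.

Lemma count_has_Pg m q Z W K N M : 1 < q -> 0 < m -> 0 < Z -> K*W < (K+1)*Z ->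
  m*K*count (fun n => has (fun b => Pg m Z W K (q ^ b) n) (iota 0 M)) (iota 0 N)
    <= 2*(q*(m*N)).
Proof.
move=> q1 m0 Z0 hK.
apply: leq_trans (leq_mul (leqnn _) (@count_has nat nat (fun b => Pg m Z W K (q ^ b)) (iota 0 M) (iota 0 N))) _.
rewrite big_distrr /=.
apply: leq_trans (leq_sum (iota 0 M) (E2 := fun b => 2 * (if q ^ b < m*N then q ^ b else 0)) _) _; first by move=> b _; exact: count_Pg.
rewrite -big_distrr /= leq_mul2l; apply/orP; right.
exact: geom_le.
Qed.

Lemma sum_le_const (s : seq nat) (F : nat -> nat) c :
  (forall i, F i <= c) -> \sum_(i <- s) F i <= size s * c.
Proof.
move=> hF; elim: s => [|x s IH]; first by rewrite big_nil.
by rewrite big_cons /= mulSn leq_add.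
Qed.

Lemma count_or4 (s : seq nat) (a b c d : pred nat) :
  count (fun n => [|| a n, b n, c n | d n]) s <= count a s + count b s + count c s + count d s.
Proof.
elim: s => [|x s IH] //=.
by move: IH; case: (a x); case: (b x); case: (c x); case: (d x) => /=; lia.
Qed.

Lemma cover_gen (H : nat -> nat) (Hinc : forall i : nat, (H i < H i.+1)%N)
  (Hsm : forall n : nat, three_smooth n <-> exists i : nat, H i = n)
  (p q j b n N K a0 c0 : nat) : p = 2 /\ q = 3 \/ p = 3 /\ q = 2 ->
  H j = q ^ b -> H j <= p * n < H j.+1 -> q ^ c0 < p ^ a0 -> 3 * K <= n -> q ^ c0 <= n -> n < N ->
  has (fun b => Pg p (q ^ c0) (p ^ a0) K (q ^ b) n) (iota 0 (p*N)).
Proof.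
move=> hpq hj hb hca hK hc nN.
have p2 : p = 2 \/ p = 3 by case: hpq => [[-> _]|[-> _]]; auto.
have q1 : 1 < q by case: hpq => [[_ ->]|[_ ->]].
have p0 : 0 < p by case: p2 => ->.
have tsq : forall x y, three_smooth (p ^ x * q ^ y).
  move=> x y; case: hpq => [[-> ->]|[-> ->]]; first by exists x, y.
  by exists y, x; rewrite mulnC.
have h1 : p * n < p * q ^ b.
  apply: (above Hinc Hsm hb); first by rewrite -hj; exact: ts_mul (Hts Hsm j).
  by rewrite hj; apply: ltn_Pmull; [case: p2 => ->|rewrite expn_gt0 ltnW].

have nb : n < q ^ b by rewrite ltn_mul2l p0 in h1.
have cb : c0 < b by rewrite -(ltn_exp2l _ _ q1); lia.
have eb : q ^ b = q ^ (b-c0) * q ^ c0 by rewrite -expnD subnK // ltnW.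
have h2 : p * n < q ^ (b-c0) * p ^ a0.
  apply: (above Hinc Hsm hb); first by rewrite mulnC; exact: tsq.
  by rewrite hj eb ltn_mul2l hca andbT expn_gt0 ltnW.
apply/hasP; exists b.
  rewrite mem_iota add0n; apply: leq_trans (ltn_expl b q1) _.
  case/andP: hb => hb _; rewrite -hj; apply: leq_trans hb _; lia.
rewrite /Pg; apply/and3P; split.
- have : p <= 3 by case: p2 => ->.
  move=> hp3; have : p * K <= 3 * K by rewrite leq_mul2r hp3 orbT.
  lia.
- by rewrite -hj; case/andP: hb.
- have h3 : p * n * q ^ c0 < q ^ (b - c0) * p ^ a0 * q ^ c0 by rewrite ltn_mul2r h2 andbT expn_gt0 (ltnW q1).
  by rewrite eb [X in _ < X]mulnAC.
Qed.

Lemma main_count (H alpha beta : nat -> nat) (f : nat -> int)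
  (Hinc : forall i : nat, (H i < H i.+1)%N)
  (Hsm : forall n : nat, three_smooth n <-> exists i : nat, H i = n)
  (Hab : forall i : nat, H i = (2 ^ alpha i * 3 ^ beta i)%N)
  (Hf : forall i n : nat, (H i <= n < H i.+1)%N -> f n = ((-1) ^+ (alpha i + beta i))%R)
  (P : pred nat)
  (HP : forall n, ~~ P n -> [|| f n.+1 != f n, f (2*n) != (- f n)%R | f (3*n) != (- f n)%R])
  (K : nat) (K0 : 0 < K) :
  exists C, forall N, K * count [pred n | ~~ P n] (iota 0 N) <= 11 * N + C.
Proof.
have [[a0 [c0 [hac hac']]] [d0 [e0 [hde hde']]]] := @approx K K0.
have [CP hCP] := poly_exp K.
pose M0 := 1 + 3 * K + 3 ^ c0 + 2 ^ e0.
exists (K * (M0 + 1) + CP) => N.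
case: (posnP N) => [->|N0]; first by rewrite /= muln0.
pose t := trunc_log 2 N.
have ht : 2 ^ t <= N by apply: trunc_logP.
pose PA n := has (fun a => has (fun b => n.+1 == 2 ^ a * 3 ^ b) (iota 0 t.+1)) (iota 0 t.+1).
pose P2 n := has (fun b => Pg 2 (3 ^ c0) (2 ^ a0) K (3 ^ b) n) (iota 0 (2 * N)).
pose P3 n := has (fun a => Pg 3 (2 ^ e0) (3 ^ d0) K (2 ^ a) n) (iota 0 (3 * N)).
have cover : forall n, n \in iota 0 N -> [pred n | ~~ P n] n ->
    [|| n < M0, PA n, P2 n | P3 n].
  move=> n; rewrite mem_iota add0n => /andP[_ nN] /HP hn.
  case: (ltnP n M0) => //= hM.
  have n0 : 0 < n by move: hM; rewrite /M0; lia.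
  have hK3 : 3 * K <= n by move: hM; rewrite /M0; lia.
  have hc3 : 3 ^ c0 <= n by move: hM; rewrite /M0; lia.
  have he2 : 2 ^ e0 <= n by move: hM; rewrite /M0; lia.
  have [i hi] := block Hinc Hsm Hab n0.
  case/or3P: hn => hn.
  - have [x [y exy]] := fail_succ Hinc Hsm Hab Hf n0 hn.
    apply/orP; left; apply/hasP; exists x.
      rewrite mem_iota add0n ltnS; apply: trunc_log_max => //.
      have : 2 ^ x <= n.+1 by rewrite exy leq_pmulr ?expn_gt0.
      lia.
    apply/hasP; exists y; last by rewrite exy.
    rewrite mem_iota add0n ltnS; apply: trunc_log_max => //.
    have : 3 ^ y <= n.+1 by rewrite exy leq_pmull ?expn_gt0.
    have : 2 ^ y <= 3 ^ y by case: y {exy} => // y; rewrite leq_exp2r.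
    lia.
  - have n2 : 0 < 2 * n by lia.
    have [j hj] := block Hinc Hsm Hab n2.
    have hl := fail_mult Hinc Hsm Hab Hf (or_introl erefl) hi hj hn.
    have ea : alpha j = 0 by move: hl; rewrite Hab logn2_sm.
    have hj3 : H j = 3 ^ beta j by rewrite Hab ea mul1n.
    apply/orP; right; apply/orP; left.
    by apply: (cover_gen Hinc Hsm _ hj3 hj) => //; left.
  - have n3 : 0 < 3 * n by lia.
    have [j hj] := block Hinc Hsm Hab n3.
    have hl := fail_mult Hinc Hsm Hab Hf (or_intror erefl) hi hj hn.
    have eb : beta j = 0 by move: hl; rewrite Hab logn3_sm.
    have hj2 : H j = 2 ^ alpha j by rewrite Hab eb muln1.
    apply/orP; right; apply/orP; right.
    by apply: (cover_gen Hinc Hsm _ hj2 hj) => //; right.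
have c1 := @count_in_le _ [pred n | ~~ P n] _ (iota 0 N) cover.
have c2 := count_or4 (iota 0 N) (fun n => n < M0) PA P2 P3.
have b1 : count (fun n => n < M0) (iota 0 N) <= M0 + 1.
  have := @count_lin 1 0 M0 N (fun n => n < M0) erefl.
  by rewrite muln1 subn0; apply => n /= h; rewrite mul1n h.
have bA : count PA (iota 0 N) <= t.+1 * (t.+1 * 2).
  apply: leq_trans (count_has _ _ _ _ _) _.
  apply: leq_trans (@sum_le_const _ _ (t.+1 * 2) _) _; last by rewrite size_iota.
  move=> a; apply: leq_trans (count_has _ _ _ _ _) _.
  apply: leq_trans (@sum_le_const _ _ 2 _) _; last by rewrite size_iota.
  move=> b.
  have := @count_lin 1 (2 ^ a * 3 ^ b).-1 (2 ^ a * 3 ^ b) N (fun n => n.+1 == 2 ^ a * 3 ^ b) erefl.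
  rewrite muln1 => h.
  have {}h : count (fun n => n.+1 == 2 ^ a * 3 ^ b) (iota 0 N) <= (2 ^ a * 3 ^ b) - (2 ^ a * 3 ^ b).-1 + 1.
    by apply: h => n /= /eqP <-; lia.
  apply: leq_trans h _; lia.
have b2 := @count_has_Pg 2 3 (3 ^ c0) (2 ^ a0) K N (2 * N) erefl erefl (expn_gt0 _ _) hac'.
have b3 := @count_has_Pg 3 2 (2 ^ e0) (3 ^ d0) K N (3 * N) erefl erefl (expn_gt0 _ _) hde'.
have bt := hCP t.
move: c1 c2 b1 bA b2 b3 bt.
set cBad := count [pred n | ~~ P n] (iota 0 N).
set cOr := count (fun n => [|| n < M0, PA n, P2 n | P3 n]) (iota 0 N).
set cM := count (fun n => n < M0) (iota 0 N).
set cA := count PA (iota 0 N).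
set cP2 := count P2 (iota 0 N); set cP3 := count P3 (iota 0 N).
move=> c1 c2 b1 bA b2 b3 bt.
have k1 : K * cBad <= K * (M0 + 1) + K * cA + K * cP2 + K * cP3.
  rewrite -!mulnDr leq_mul2l; apply/orP; right; lia.
have k2 : K * cA <= 2 ^ t + CP.
  apply: leq_trans bt; rewrite -mulnA leq_mul2l; apply/orP; right.
  move: bA; rewrite addn1 expnS expn1; lia.
have k3 : K * cP2 <= 6 * N by move: b2; lia.
have k4 : K * cP3 <= 4 * N by move: b3; lia.
lia.
Qed.

End HPart.

Section RealPart.

Lemma density0 (R : realType) (A : pred nat) :
  (forall K : nat, (0 < K)%N -> exists C : nat, forall N : nat,
       (K * count A (iota 0 N) <= 11 * N + C)%N) ->
  upper_density R A = 0.
Proof.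
move=> hyp; rewrite /upper_density; apply: (cvg_limn_inf_sup _).2.
apply/cvgrPdist_lt => e e0.
pose K := (Num.truncn (12 / e)).+1.
have [C hC] := hyp K erefl.
have hK : 12 / e < K%:R by exact: truncnS_gt.
exists C.+1 => // N /= hN.
have N0 : (0 < N)%N by case: N hN.
set c := count A (iota 0 N).
have hc : (c * K <= 12 * N)%N by have := hC N; rewrite -/c mulnC; lia.
rewrite sub0r normrN ger0_norm ?divr_ge0 ?ler0n //.
rewrite ltr_pdivrMr ?ltr0n //.
have K0 : (0 : R) < K%:R by rewrite ltr0n.
rewrite -(ltr_pM2r K0).
apply: (le_lt_trans (y := 12 * N%:R)).
  by move: hc; rewrite -(ler_nat R) !natrM.
have : 12 < e * K%:R by rewrite mulrC -ltr_pdivrMr.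
by move=> h12; rewrite mulrAC ltr_pM2r ?ltr0n.
Qed.

End RealPart.

Theorem lemma4p2 (R : realType) (H alpha beta : nat -> nat) (f : nat -> int) :
  (forall i : nat, (H i < H i.+1)%N) ->
  (forall n : nat, three_smooth n <-> exists i : nat, H i = n) ->
  (forall i : nat, H i = (2 ^ alpha i * 3 ^ beta i)%N) ->
  f 0%N = 1 ->
  (forall i n : nat, (H i <= n < H i.+1)%N -> f n = (-1) ^+ (alpha i + beta i)) ->
  almost_all R [pred n : nat | [&& f n.+1 == f n,
                                  f (2 * n)%N == - f n &
                                  f (3 * n)%N == - f n]].
Proof.
move=> Hinc Hsm Hab _ Hf; rewrite /almost_all; apply: density0 => K K0.
apply: (main_count Hinc Hsm Hab Hf _ K0) => n /=.
by rewrite !negb_and.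
Qed.
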